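(* Let $S$ be a $\mathcal C$-semigroup in $\mathbb N^d$ and $\mathbf f\in\mathbb N^d$ such that $\mathrm{PF}(S)=\{\mathbf f\}$ or $\mathrm{PF}(S)=\{\mathbf f,\mathbf f/2\}$. Then $S$ is $\mathcal C$-irreducible.
   Context: For a finitely generated submonoid $T$ of $\mathbb N^d$, $\mathrm{pos}(T)$ is the rational cone of nonnegative rational combinations of its generators, $\mathcal H(T)=(\mathrm{pos}(T)\setminus T)\cap\mathbb N^d$, and $\mathrm{PF}(T)=\{\mathbf a\in\mathcal H(T):\mathbf a+(T\setminus\{0\})\subseteq T\}$. $T$ is a $\mathcal C$-semigroup if $\mathcal H(T)$ is finite. A $\mathcal C$-semigroup $S$ is $\mathcal C$-irreducible if it cannot be expressed as the intersection of two finitely generated submonoids $S_1,S_2$ of $\mathbb N^d$ with $\mathrm{pos}(S_1)=\mathrm{pos}(S_2)=\mathrm{pos}(S)$, each containing $S$ properly. *)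

(* Defs.v *)
From mathcomp Require Import all_boot all_order all_algebra.
Set Implicit Arguments. Unset Strict Implicit. Unset Printing Implicit Defensive.
Import Order.TTheory GRing.Theory Num.Theory.
Local Open Scope ring_scope.

Definition natvec (d : nat) := {ffun 'I_d -> nat}.
Definition ratvec (d : nat) := {ffun 'I_d -> rat}.

Definition vzero (d : nat) : natvec d := [ffun => 0%N].
Definition vadd (d : nat) (a b : natvec d) : natvec d := [ffun i => (a i + b i)%N].

Definition vrat (d : nat) (a : natvec d) : ratvec d := [ffun i => (a i)%:R].

Definition nset (d : nat) := natvec d -> Prop.

Definition nat_comb (d : nat) (gs : seq (natvec d)) (c : seq nat) : natvec d :=
  [ffun i => (\sum_(k < size gs) nth 0%N c k * nth (vzero d) gs k i)%N].

Definition gen_monoid (d : nat) (gs : seq (natvec d)) : nset d :=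
  fun x => exists c : seq nat, x = nat_comb gs c.

Definition fg_submonoid (d : nat) (T : nset d) : Prop :=
  exists gs : seq (natvec d), forall x, T x <-> gen_monoid gs x.

(* pos(T): nonnegative rational combinations of elements of T
   (for finitely generated T this is the cone spanned by its generators) *)
Definition pos (d : nat) (T : nset d) : ratvec d -> Prop :=
  fun x => exists (gs : seq (natvec d)) (c : seq rat),
    (forall g, g \in gs -> T g) /\ (forall q, q \in c -> 0 <= q) /\
    x = [ffun i => \sum_(k < size gs) nth 0 c k * ((nth (vzero d) gs k i)%:R)].

Definition holes (d : nat) (T : nset d) : nset d :=
  fun a => pos T (vrat a) /\ ~ T a.

Definition PF (d : nat) (T : nset d) : nset d :=
  fun a => holes T a /\ (forall t, T t -> t <> vzero d -> T (vadd a t)).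

Definition C_semigroup (d : nat) (S : nset d) : Prop :=
  fg_submonoid S /\ exists l : seq (natvec d), forall a, holes S a -> a \in l.

Definition same_cone (d : nat) (T U : nset d) : Prop :=
  forall x, pos T x <-> pos U x.

Definition proper_sub (d : nat) (S T : nset d) : Prop :=
  (forall x, S x -> T x) /\ exists x, T x /\ ~ S x.

Definition C_irreducible (d : nat) (S : nset d) : Prop :=
  C_semigroup S /\
  ~ exists S1 S2 : nset d,
      fg_submonoid S1 /\ fg_submonoid S2 /\
      same_cone S1 S /\ same_cone S2 S /\
      proper_sub S S1 /\ proper_sub S S2 /\
      (forall x, S x <-> (S1 x /\ S2 x)).

(* Main.v *)
Require Import Defs.
From mathcomp Require Import all_boot all_order all_algebra.
From mathcomp Require Import zify.
From Stdlib Require Import Classical.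
Set Implicit Arguments.

Definition wt {d : nat} (x : natvec d) : nat := (\sum_(i < d) x i)%N.

Lemma wt_add d (x y : natvec d) : wt (vadd x y) = (wt x + wt y)%N.
Proof. by rewrite /wt -big_split; apply: eq_bigr => i _; rewrite ffunE. Qed.

Lemma wt_pos d (y : natvec d) : y <> vzero d -> (0 < wt y)%N.
Proof.
move=> ny; rewrite lt0n /wt sum_nat_eq0; apply/negP => /forallP H.
apply: ny; apply/ffunP => i; rewrite ffunE; exact/eqP/(H i).
Qed.

Lemma wt_le_sum d (l : seq (natvec d)) y : y \in l -> (wt y <= sumn (map (@wt d) l))%N.
Proof.
elim: l => //= a l IH; rewrite inE => /orP [/eqP -> | /IH]; lia.
Qed.

Lemma fg_add d (T : nset d) : fg_submonoid T -> forall x y, T x -> T y -> T (vadd x y).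
Proof.
move=> [gs H] x y /H [c1 ->] /H [c2 ->]; apply/H.
exists (mkseq (fun k => nth 0%N c1 k + nth 0%N c2 k)%N (size gs)).
apply/ffunP => i; rewrite !ffunE -big_split /=; apply: eq_bigr => k _.
by rewrite nth_mkseq // mulnDl.
Qed.

Lemma pos_self d (T : nset d) x : T x -> pos T (vrat x).
Proof.
move=> Tx; exists [:: x], [:: 1%R]; split; first by move=> g; rewrite inE => /eqP ->.
split; first by move=> q; rewrite inE => /eqP ->.
apply/ffunP => i; rewrite !ffunE big_ord1 /= GRing.mul1r //.
Qed.

Lemma key d (S T : nset d) (l : seq (natvec d)) :
  (forall a, holes S a -> a \in l) ->
  (forall x y, T x -> T y -> T (vadd x y)) ->
  (forall x, S x -> T x) ->
  (forall x, T x -> pos S (vrat x)) ->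
  forall x, T x -> ~ S x -> exists y, T y /\ PF S y.
Proof.
move=> Hl Tadd sST Tpos.
set B := sumn (map (@wt d) l).
suff: forall m x, (B - wt x)%N = m -> T x -> ~ S x -> exists y, T y /\ PF S y.
  by move=> H x; apply: (H _ x erefl).
elim/ltn_ind => m IH x Em Tx nSx.
have hx : holes S x by split; [apply: Tpos | ].
case: (classic (PF S x)) => [P|nP]; first by exists x.
have [t Ht] : exists t, ~ (S t -> t <> vzero d -> S (vadd x t)).
  apply: not_all_ex_not => H; apply: nP; split => //.
move: (imply_to_and _ _ Ht) => {Ht} [St Ht].
move: (imply_to_and _ _ Ht) => [nt nSxt].
have Txt : T (vadd x t) by apply: Tadd => //; apply: sST.
have hxt : holes S (vadd x t) by split; [apply: Tpos |].
have := @wt_le_sum d l _ (Hl _ hxt); rewrite -/B wt_add => Hb.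
have := wt_pos nt => Hp.
apply: (IH (B - wt (vadd x t))%N) => //; rewrite wt_add; lia.
Qed.

Unset Implicit Arguments.
Theorem proposition4p6 (d : nat) (S : nset d) (f : natvec d) :
  C_semigroup S ->
  ((forall a, PF S a <-> a = f) \/
   (exists h : natvec d, (forall i, (h i + h i)%N = f i) /\
      (forall a, PF S a <-> a = f \/ a = h))) ->
  C_irreducible S.
Proof.
move=> CS HPF; split => //.
case: (CS) => _ [l Hl].
move=> [S1 [S2 [fg1 [fg2 [c1 [c2 [[sub1 [x1 [T1 n1]]] [[sub2 [x2 [T2 n2]]] inter]]]]]]]].
have pos1 : forall x, S1 x -> pos S (vrat x) by move=> x /pos_self /c1.
have pos2 : forall x, S2 x -> pos S (vrat x) by move=> x /pos_self /c2.
have [y1 [S1y1 P1]] := @key d S S1 l Hl (fg_add fg1) sub1 pos1 _ T1 n1.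
have [y2 [S2y2 P2]] := @key d S S2 l Hl (fg_add fg2) sub2 pos2 _ T2 n2.
case: HPF => [H|[h [hf H]]].
- have e1 := proj1 (H _) P1; have e2 := proj1 (H _) P2; subst.
  have Sf : S f by apply/inter.
  by case: P1 => [[_ ?] _].
- have ef : f = vadd h h by apply/ffunP => i; rewrite ffunE hf.
  have PFf : PF S f by apply/H; left.
  have Sfi : forall (U : nset d), fg_submonoid U -> forall y, U y -> (y = f \/ y = h) -> U f.
    move=> U fU y Uy [e|e]; subst y => //; rewrite ef; exact: fg_add.
  have Sf : S f by apply/inter; split; [apply: (Sfi _ fg1 y1) | apply: (Sfi _ fg2 y2)];
    rewrite // -H.
  by case: PFf => [[_ ?] _].
Qed.
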